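(* Let $\mathcal{O}=(X_{\min},X_{\max})$ be bounded, $T>0$, and let $a=\tfrac12\sigma^2$, $b$, $r$ be bounded functions on $(0,T)\times\mathcal{O}$ such that $a(t,x)\ge\eta_0>0$ for all $(t,x)$ and $|a(t,x)-a(t,y)|\le L|x-y|$ for all $t\in(0,T)$, $x,y\in\mathcal{O}$ (for some $\eta_0>0$, $L\ge0$). For $J\ge1$ let $h=\frac{X_{\max}-X_{\min}}{J+1}$, $x_i=X_{\min}+ih$, and for a fixed time $t$ let $A$ be the tridiagonal $J\times J$ matrix with entries $A_{i,i-1}=-\frac{a(t,x_i)}{h^2}-\frac{b(t,x_i)}{2h}$, $A_{i,i}=\frac{2a(t,x_i)}{h^2}+r(t,x_i)$, $A_{i,i+1}=-\frac{a(t,x_i)}{h^2}+\frac{b(t,x_i)}{2h}$. Then there exist $\eta>0$ and $\gamma\ge0$, depending only on $\eta_0,L,\|b\|_\infty,\|r\|_\infty$ (in particular independent of $J$, $h$ and $t$), such that for all $e\in\mathbb{R}^J$, $$\langle e,Ae\rangle\ge\eta\,N(e/h)^2-\gamma\|e\|_2^2,$$ where $N(x):=\big(\sum_{j=1}^{J+1}|x_j-x_{j-1}|^2\big)^{1/2}$ with the convention $x_0=x_{J+1}=0$.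
   Context: $\langle\cdot,\cdot\rangle$ and $\|\cdot\|_2$ are the Euclidean inner product and norm on $\mathbb{R}^J$. *)

(* Defs.v *)
From HB Require Import structures.
From mathcomp Require Import all_boot all_order all_algebra.
From mathcomp Require Import reals.

Set Implicit Arguments. Unset Strict Implicit. Unset Printing Implicit Defensive.
Import Order.TTheory GRing.Theory Num.Theory.
Local Open Scope ring_scope.

Section FD.
Variable R : realType.

Definition mesh (Xmin Xmax : R) (J : nat) : R := (Xmax - Xmin) / (J.+1)%:R.

Definition grid (Xmin Xmax : R) (J : nat) (i : nat) : R :=
  Xmin + i%:R * mesh Xmin Xmax J.

(* The tridiagonal finite-difference matrix at time t.
   Row/column index i : 'I_J corresponds to paper index i+1. *)
Definition fdmat (a b r : R -> R -> R) (Xmin Xmax t : R) (J : nat) : 'M[R]_J :=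
  let h := mesh Xmin Xmax J in
  \matrix_(i < J, j < J)
    (let xi := grid Xmin Xmax J i.+1 in
     if (nat_of_ord j == nat_of_ord i)%N then 2 * a t xi / h ^+ 2 + r t xi
     else if (nat_of_ord j).+1 == nat_of_ord i then - (a t xi / h ^+ 2) - b t xi / (2 * h)
     else if nat_of_ord j == (nat_of_ord i).+1 then - (a t xi / h ^+ 2) + b t xi / (2 * h)
     else 0).

Definition inner (J : nat) (u v : 'cV[R]_J) : R := \sum_(i < J) u i 0 * v i 0.
Definition norm2sq (J : nat) (u : 'cV[R]_J) : R := \sum_(i < J) (u i 0) ^+ 2.

(* extension of e in R^J to indices 0..J+1 (paper indexing) with e_0 = e_{J+1} = 0 *)
Definition ext (J : nat) (e : 'cV[R]_J) (k : nat) : R :=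
  match k with
  | 0 => 0
  | k'.+1 => if insub k' is Some i then e (i : 'I_J) 0 else 0
  end.

Definition Ndisc (J : nat) (x : nat -> R) : R :=
  Num.sqrt (\sum_(1 <= j < J.+2) `|x j - x j.-1| ^+ 2).

End FD.

(* Main.v *)
Require Import Defs.
From HB Require Import structures.
From mathcomp Require Import all_boot all_order all_algebra.
From mathcomp Require Import reals lra zify ring.
Import Order.TTheory GRing.Theory Num.Theory.
Local Open Scope ring_scope.

Lemma sum_nat_if (R : realType) (n k : nat) (c : R) (g : nat -> R) :
  \sum_(0 <= m < n) (if m == k then c else 0) * g m = if (k < n)%N then c * g k else 0.
Proof.
elim: n => [|n IH]; first by rewrite big_geq // ltn0.
rewrite big_nat_recr //= IH.
case: (ltngtP k n) => [lt|gt|->].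
- have -> : (k < n.+1)%N by lia.
  by rewrite mul0r addr0.
- have -> : (k < n.+1)%N = false by lia.
  by rewrite mul0r addr0.
- by rewrite ltnSn add0r.
Qed.

Lemma ext0 (R : realType) J (e : 'cV[R]_J) : ext e 0 = 0.
Proof. by []. Qed.

Lemma ext_big (R : realType) J (e : 'cV[R]_J) k : (J < k)%N -> ext e k = 0.
Proof.
case: k => [//|k] H /=. by rewrite insubF //; lia.
Qed.

Lemma ext_ord (R : realType) J (e : 'cV[R]_J) (i : 'I_J) : ext e (val i).+1 = e i 0.
Proof. by rewrite /= valK. Qed.

Lemma row_nat (R : realType) (n i : nat) (X Y Z : R) (E : nat -> R) :
  (i < n)%N -> E 0%N = 0 -> E n.+1 = 0 ->
  \sum_(0 <= m < n) (if m == i then X else if m.+1 == i then Y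
                     else if m == i.+1 then Z else 0) * E m.+1
  = X * E i.+1 + Y * E i + Z * E i.+2.
Proof.
move=> lin E0 En.
have HZ : \sum_(0 <= m < n) (if m == i.+1 then Z else 0) * E m.+1 = Z * E i.+2.
  rewrite (sum_nat_if _ n i.+1 Z (fun m => E m.+1)).
  case: ifP => // /negbT; rewrite -leqNgt => H.
  have -> : i.+2 = n.+1 by lia.
  by rewrite En mulr0.
have HX : \sum_(0 <= m < n) (if m == i then X else 0) * E m.+1 = X * E i.+1.
  by rewrite (sum_nat_if _ n i X (fun m => E m.+1)) lin.
case: i lin HZ HX => [|i] lin HZ HX.
- rewrite E0 mulr0 addr0 -HX -HZ -big_split /=.
  apply: eq_bigr => m _.
  by case: (m =P 0%N) => h1; case: (m =P 1%N) => h2 //=; try (exfalso; lia); rewrite ?mul0r ?add0r ?addr0.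
- have HY : \sum_(0 <= m < n) (if m == i then Y else 0) * E m.+1 = Y * E i.+1.
    by rewrite (sum_nat_if _ n i Y (fun m => E m.+1)); have -> : (i < n)%N by lia.
  rewrite -HX -HY -HZ -!big_split /=.
  apply: eq_bigr => m _.
  rewrite eqSS; by case: (m =P i.+1) => h1; case: (m =P i) => h2; case: (m =P i.+2) => h3 //=; try (exfalso; lia); rewrite ?mul0r ?add0r ?addr0.
Qed.
Lemma pw (R : realType) (e0 Lp Bb Br al m be rho x y E : R) :
  0 < e0 -> e0 <= al -> `|m| <= Lp -> `|be| <= Bb -> Bb <= Lp -> `|rho| <= Br ->
  e0 / 2 * x ^+ 2 - e0 / 4 * y ^+ 2 - (Lp ^+ 2 / e0 + Br) * E ^+ 2 <=
  al * x ^+ 2 + m * E * x + rho * E ^+ 2 + be / 2 * E * y.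
Proof.
move=> e0p hal /ler_normlP [hm1 hm2] /ler_normlP [hb1 hb2] hBL /ler_normlP [hr1 hr2].
have m2 : m ^+ 2 <= Lp ^+ 2.
  have H : 0 <= (Lp - m) * (Lp + m) by apply: mulr_ge0; lra.
  nra.
have b2 : be ^+ 2 <= Lp ^+ 2.
  have H : 0 <= (Lp - be) * (Lp + be) by apply: mulr_ge0; lra.
  nra.
rewrite -subr_ge0.
have e0n : e0 != 0 by rewrite gt_eqF.
have -> : al * x ^+ 2 + m * E * x + rho * E ^+ 2 + be / 2 * E * y -
   (e0 / 2 * x ^+ 2 - e0 / 4 * y ^+ 2 - (Lp ^+ 2 / e0 + Br) * E ^+ 2) =
   (al - e0) * x ^+ 2 + e0 / 2 * (x + m * E / e0) ^+ 2 + e0 / 4 * (y + be * E / e0) ^+ 2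
   + (rho + Br) * E ^+ 2 + ((4 * Lp ^+ 2 - 2 * m ^+ 2 - be ^+ 2) / (4 * e0)) * E ^+ 2.
  by field.
have h4 : 0 <= (4 * Lp ^+ 2 - 2 * m ^+ 2 - be ^+ 2) / (4 * e0).
  apply: divr_ge0; [nra | lra].
have hs : forall z : R, 0 <= z ^+ 2 by move=> z; exact: sqr_ge0.
repeat apply: addr_ge0; apply: mulr_ge0; rewrite ?hs //; lra.
Qed.
Lemma mesh_gt0 (R : realType) (Xmin Xmax : R) J : Xmin < Xmax -> 0 < mesh Xmin Xmax J.
Proof. move=> H; rewrite /mesh divr_gt0 // ?subr_gt0 // ltr0n. Qed.

Lemma meshE (R : realType) (Xmin Xmax : R) J : (J.+1)%:R * mesh Xmin Xmax J = Xmax - Xmin.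
Proof. by rewrite /mesh mulrC divfK // pnatr_eq0. Qed.

Lemma grid_in (R : realType) (Xmin Xmax : R) J m : Xmin < Xmax ->
  (0 < m)%N -> (m <= J)%N -> Xmin < grid Xmin Xmax J m < Xmax.
Proof.
move=> hX m0 mJ; have hp := @mesh_gt0 R Xmin Xmax J hX; have hE := @meshE R Xmin Xmax J.
rewrite /grid.
have h1 : 1 <= m%:R :> R by rewrite ler1n.
have h2 : m%:R <= J%:R :> R by rewrite ler_nat.
rewrite -natr1 in hE.
apply/andP; split; nra.
Qed.

Lemma grid_step (R : realType) (Xmin Xmax : R) J m :
  grid Xmin Xmax J m.+1 - grid Xmin Xmax J m = mesh Xmin Xmax J.
Proof. rewrite /grid -natr1; ring. Qed.

Theorem lemma4p6 (R : realType) (eta0 L Bb Br : R) :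
  0 < eta0 -> 0 <= L -> 0 <= Bb -> 0 <= Br ->
  exists eta : R, exists gamma : R, 0 < eta /\ 0 <= gamma /\
  forall (Xmin Xmax T : R) (a b r : R -> R -> R),
    Xmin < Xmax -> 0 < T ->
    (exists Ba : R, forall t x, 0 < t < T -> Xmin < x < Xmax -> `|a t x| <= Ba) ->
    (forall t x, 0 < t < T -> Xmin < x < Xmax -> eta0 <= a t x) ->
    (forall t x y, 0 < t < T -> Xmin < x < Xmax -> Xmin < y < Xmax ->
       `|a t x - a t y| <= L * `|x - y|) ->
    (forall t x, 0 < t < T -> Xmin < x < Xmax -> `|b t x| <= Bb) ->
    (forall t x, 0 < t < T -> Xmin < x < Xmax -> `|r t x| <= Br) ->
    forall (J : nat) (t : R), (0 < J)%N -> 0 < t < T ->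
    forall e : 'cV[R]_J,
      inner e (fdmat a b r Xmin Xmax t J *m e)
      >= eta * Ndisc J (fun k => ext e k / mesh Xmin Xmax J) ^+ 2
         - gamma * norm2sq e.
Proof.
move=> he0 hL hBb hBr.
exists (eta0 / 4), ((L + Bb) ^+ 2 / eta0 + Br).
split; first lra.
split; first by apply: addr_ge0 => //; apply: divr_ge0 => //; [exact: sqr_ge0 | lra].
move=> Xmin Xmax T a b r hX hT _ ha hLip hb hr J t J0 ht e.
pose h := mesh Xmin Xmax J.
have hp : 0 < h := @mesh_gt0 R Xmin Xmax J hX.
have hn : h != 0 by rewrite gt_eqF.
pose E := ext e.
have E0 : E 0%N = 0 by [].
have EJ1 : E J.+1 = 0 by rewrite /E ext_big.
have EJ2 : E J.+2 = 0 by rewrite /E ext_big.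
pose cl := fun k : nat => minn (maxn k 1) J.
have cl_in : forall k, (0 < cl k)%N && (cl k <= J)%N by move=> k; rewrite /cl; lia.
have cl_id : forall k, (0 < k)%N -> (k <= J)%N -> cl k = k by move=> k *; rewrite /cl; lia.
pose At := fun k => a t (grid Xmin Xmax J (cl k)).
pose Bt := fun k => b t (grid Xmin Xmax J (cl k)).
pose Rt := fun k => r t (grid Xmin Xmax J (cl k)).
have gin : forall k, Xmin < grid Xmin Xmax J (cl k) < Xmax.
  by move=> k; case/andP: (cl_in k) => *; apply: grid_in.
pose D := fun k : nat => (E k - E k.-1) / h.
pose term := fun k : nat => E k * ((2 * At k / h ^+ 2 + Rt k) * E k
    + (- (At k / h ^+ 2) - Bt k / (2 * h)) * E k.-1
    + (- (At k / h ^+ 2) + Bt k / (2 * h)) * E k.+1).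
pose F := fun k : nat => - (At k.-1 * E k.-1 * D k / h).
pose P := fun k : nat => At k.-1 * D k ^+ 2 + ((At k - At k.-1) / h + Bt k / 2) * E k * D k
   + Rt k * E k ^+ 2 + Bt k / 2 * E k * D k.+1.
pose gam := (L + Bb) ^+ 2 / eta0 + Br.
have row : forall i : 'I_J, (fdmat a b r Xmin Xmax t J *m e) i 0 =
    (2 * At i.+1 / h ^+ 2 + Rt i.+1) * E i.+1 + (- (At i.+1 / h ^+ 2) - Bt i.+1 / (2 * h)) * E i
    + (- (At i.+1 / h ^+ 2) + Bt i.+1 / (2 * h)) * E i.+2.
  move=> i.
  rewrite -(@row_nat R J i _ _ _ E (ltn_ord i) E0 EJ1).
  rewrite mxE big_mkord; apply: eq_bigr => j _.
  rewrite !mxE /= valK /At /Bt /Rt cl_id //.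
have step3 : inner e (fdmat a b r Xmin Xmax t J *m e) = \sum_(1 <= k < J.+2) term k.
  rewrite big_nat_recr //=.
  have -> : term J.+1 = 0.
    by move: EJ1; rewrite /term /E /= => ->; rewrite mul0r.
  rewrite addr0 big_add1 /=.
  rewrite /inner big_mkord.
  apply: eq_bigr => i _.
  by rewrite row /term /= -ext_ord.
have step4 : \sum_(1 <= k < J.+2) term k = \sum_(1 <= k < J.+2) P k.
  have pt : forall k, term k = P k + (F k.+1 - F k).
    move=> k; rewrite /term /P /F /D /=; field; exact: hn.
  rewrite (eq_bigr _ (fun k _ => pt k)) big_split /= telescope_sumr //.
  have -> : F J.+2 = 0 by move: EJ1; rewrite /F /E /= => ->; rewrite ?mulr0 ?mul0r ?oppr0.
  have -> : F 1%N = 0 by rewrite /F /E /= ?mulr0 ?mul0r ?oppr0.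
  by rewrite subrr addr0.
have step5 : \sum_(1 <= k < J.+2) (eta0 / 2 * D k ^+ 2 - eta0 / 4 * D k.+1 ^+ 2 - gam * E k ^+ 2)
    <= \sum_(1 <= k < J.+2) P k.
  apply: ler_sum_nat => k /andP [k1 k2].
  have hcl : cl k = cl k.-1 \/ cl k = (cl k.-1).+1 by rewrite /cl; lia.
  have hd : `|grid Xmin Xmax J (cl k) - grid Xmin Xmax J (cl k.-1)| <= h.
    case: hcl => ->; first by rewrite subrr normr0 ltW.
    by rewrite grid_step gtr0_norm.
  have hA : `|At k - At k.-1| <= L * h.
    apply: le_trans (hLip t _ _ ht (gin k) (gin k.-1)) _.
    nra.
  have hA' : `|(At k - At k.-1) / h| <= L.
    by rewrite normrM normfV (gtr0_norm hp) ler_pdivrMr.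
  have hB := hb t _ ht (gin k).
  rewrite /P /gam.
  apply: (@pw R eta0 (L + Bb) Bb Br) => //.
  - exact: ha ht (gin k.-1).
  - move: hA' hB => /ler_normlP [u1 u2] /ler_normlP [v1 v2].
    apply/ler_normlP; rewrite /Bt; split; lra.
  - lra.
  - exact: hr ht (gin k).
have hN : Ndisc J (fun k => ext e k / mesh Xmin Xmax J) ^+ 2 = \sum_(1 <= k < J.+2) D k ^+ 2.
  rewrite /Ndisc sqr_sqrtr; last by apply: sumr_ge0 => k _; exact: sqr_ge0.
  apply: eq_bigr => k _; rewrite real_normK ?num_real // /D /E /h mulrBl //.
have hE : norm2sq e = \sum_(1 <= k < J.+2) E k ^+ 2.
  rewrite big_nat_recr // EJ1 expr2 mulr0 /= addr0 big_add1 /=.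
  rewrite /norm2sq big_mkord.
  by apply: eq_bigr => i _; rewrite valK.
have hS : \sum_(1 <= k < J.+2) D k.+1 ^+ 2 <= \sum_(1 <= k < J.+2) D k ^+ 2.
  rewrite [in X in X <= _]big_nat_recr // [in X in _ <= X]big_nat_recl //.
  have -> : D J.+2 = 0 by move: EJ1 EJ2; rewrite /D /E /= => -> ->; rewrite subrr mul0r.
  rewrite expr2 mulr0 /= addr0 addrC lerDl.
  exact: sqr_ge0.
rewrite step3 step4 hN hE; apply: le_trans step5.
rewrite !sumrB -!mulr_sumr.
have := mulr_ge0 (_ : 0 <= eta0 / 4) (_ : 0 <= \sum_(1 <= k < J.+2) D k ^+ 2 - \sum_(1 <= k < J.+2) D k.+1 ^+ 2).
rewrite subr_ge0 => /(_ ltac:(lra) hS).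
move=> H; rewrite /gam; lra.
Qed.
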